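(* Let $n\ge1$, $\mu>0$, and consider $\min_{x\in\mathcal S^{n-1}} f(x)+\mu\|x\|_1$, where $\mathcal S^{n-1}=\{x\in\mathbb R^n:x^\top x=1\}$. Let $x^*$ be a local optimal solution and let $y^*\in\mathbb R^n$ satisfy $\Pi_{x^*}(\nabla f(x^* )+y^* )=0$ and $y^*\in\mu\partial\|x^*\|_1$. Then $$T_{x^*}\mathcal S^{n-1}+\mathcal C_{\theta,g_1}(x^*,y^* )=\mathbb R^n,$$ i.e. the M-SRCQ holds at $x^*$ with respect to $y^*$, and consequently $y^*$ is the unique vector satisfying these two conditions at $x^*$.
   Context: $f$ is a smooth function on an open set of $\mathbb R^n$ containing the unit sphere $\mathcal S^{n-1}$ (viewed as a Riemannian submanifold of $\mathbb R^n$), with Euclidean gradient $\nabla f$. $T_x\mathcal S^{n-1}=\{\xi:x^\top\xi=0\}$ and $\Pi_x(v)=v-xx^\top v$ is the orthogonal projection onto it. $\partial\|\cdot\|_1$ is the convex subdifferential. With $\theta=\mu\|\cdot\|_1$ and $g_1(x)=x$, $\theta^\downarrow(x;d)=\mu\sum_{x_i=0}|d_i|+\mu\sum_{x_i>0}d_i-\mu\sum_{x_i<0}d_i$ and $\mathcal C_{\theta,g_1}(x,y)=\{d\in\mathbb R^n:\theta^\downarrow(x;d)=\langle d,y\rangle\}$. *)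

(* Defs.v *)
From HB Require Import structures.
From mathcomp Require Import all_boot all_order all_algebra.
From mathcomp Require Import all_classical all_reals all_analysis.
Set Implicit Arguments. Unset Strict Implicit. Unset Printing Implicit Defensive.
Import Order.TTheory GRing.Theory Num.Theory.
Import numFieldNormedType.Exports.
Local Open Scope classical_set_scope.
Local Open Scope ring_scope.

Section Defs.
Variables (R : realType) (n : nat).
Notation V := 'rV[R]_n.

Definition dotv (u v : V) : R := \sum_(i < n) u 0 i * v 0 i.

Definition l1norm (x : V) : R := \sum_(i < n) `|x 0 i|.

Definition sphere : set V := [set x | dotv x x = 1].

Definition tangent (x : V) : set V := [set xi | dotv x xi = 0].

Definition proj_tan (x v : V) : V := v - (dotv x v) *: x.

Definition basisv (i : 'I_n) : V := delta_mx 0 i.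

Fixpoint iter_dir (f : V -> R) (vs : seq V) : V -> R :=
  match vs with
  | [::] => f
  | v :: vs' => fun x => 'D_v (iter_dir f vs') x
  end.

Definition smooth_on (U : set V) (f : V -> R) : Prop :=
  forall vs : seq V,
    (forall x v, U x -> derivable (iter_dir f vs) x v) /\
    {within U, continuous (iter_dir f vs)}.

Definition egrad (f : V -> R) (x : V) : V := \row_(i < n) 'D_(basisv i) f x.

Definition subdiff_l1 (x : V) : set V :=
  [set g | forall z : V, l1norm x + dotv g (z - x) <= l1norm z].

Definition mu_subdiff_l1 (mu : R) (x : V) : set V :=
  [set y | exists2 g, subdiff_l1 x g & y = mu *: g].

(* theta^downarrow(x; d) for theta = mu ||.||_1, g_1 = id *)
Definition theta_dd (mu : R) (x d : V) : R :=
  mu * (\sum_(i < n | x 0 i == 0) `|d 0 i|)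
  + mu * (\sum_(i < n | 0 < x 0 i) d 0 i)
  - mu * (\sum_(i < n | x 0 i < 0) d 0 i).

Definition crit_cone (mu : R) (x y : V) : set V :=
  [set d | theta_dd mu x d = dotv d y].

Definition local_min_on_sphere (F : V -> R) (x : V) : Prop :=
  sphere x /\ \forall z \near x, sphere z -> F x <= F z.

End Defs.

(* Main.v *)
Require Import Defs.
From HB Require Import structures.
From mathcomp Require Import all_boot all_order all_algebra.
From mathcomp Require Import all_classical all_reals all_analysis.
From mathcomp Require Import lra.
Import Order.TTheory GRing.Theory Num.Theory.
Import numFieldNormedType.Exports.
Local Open Scope classical_set_scope.
Local Open Scope ring_scope.

Lemma basis_entry (R : realType) n (i j : 'I_n) (a : R) :
  (a *: basisv R i) 0 j = if j == i then a else 0.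
Proof.
rewrite /basisv !mxE eqxx /= eq_sym; case: (i == j); rewrite ?mulr1 ?mulr0 //.
Qed.

Lemma dot_basis_r (R : realType) n (i : 'I_n) (a : R) (w : 'rV[R]_n) :
  dotv w (a *: basisv R i) = a * w 0 i.
Proof.
rewrite /dotv (bigD1 i) //= big1 ?addr0; last first.
  by move=> j /negPf ji; rewrite basis_entry ji mulr0.
by rewrite basis_entry eqxx mulrC.
Qed.

Lemma dot_basis_l (R : realType) n (i : 'I_n) (a : R) (w : 'rV[R]_n) :
  dotv (a *: basisv R i) w = a * w 0 i.
Proof.
rewrite -dot_basis_r /dotv; apply: eq_bigr => j _; by rewrite mulrC.
Qed.

Lemma dotvB (R : realType) n (w u v : 'rV[R]_n) :
  dotv w (u - v) = dotv w u - dotv w v.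
Proof.
rewrite /dotv -sumrB; apply: eq_bigr => j _; rewrite !mxE; lra.
Qed.

Lemma key (R : realType) n (x g : 'rV[R]_n) i :
  subdiff_l1 x g -> g 0 i * x 0 i = `|x 0 i|.
Proof.
move=> H.
have E t : l1norm (x + t *: basisv R i) = l1norm x - `|x 0 i| + `|x 0 i + t|.
  rewrite /l1norm (bigD1 i) //= [in RHS](bigD1 i) //=.
  rewrite [in X in X + _ = _]mxE basis_entry eqxx.
  have -> : \sum_(j < n | j != i) `|(x + t *: basisv R i) 0 j|
          = \sum_(j < n | j != i) `|x 0 j|.
    apply: eq_bigr => j /negPf ji; by rewrite mxE basis_entry ji addr0.
  lra.
have D t : dotv g ((x + t *: basisv R i) - x) = t * g 0 i.
  by rewrite addrAC subrr add0r dot_basis_r.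
have h1 := H (x + (- x 0 i) *: basisv R i).
have h2 := H (x + (x 0 i) *: basisv R i).
rewrite E D in h1; rewrite E D in h2.
rewrite subrr normr0 in h1.
have e2 : `|x 0 i + x 0 i| = `|x 0 i| + `|x 0 i|.
  by rewrite -mulr2n normrMn mulr2n.
rewrite e2 in h2.
apply/eqP; rewrite eq_le; apply/andP; split; lra.
Qed.

Lemma yval (R : realType) n (mu : R) (x y : 'rV[R]_n) i :
  mu_subdiff_l1 mu x y -> y 0 i * x 0 i = mu * `|x 0 i|.
Proof.
case=> g /(@key _ _ _ _ i) hg ->; by rewrite mxE -mulrA hg.
Qed.

Lemma sum_basis (R : realType) n (P : pred 'I_n) (G : R -> R) i (a : R) :
  G 0 = 0 ->
  \sum_(j < n | P j) G ((a *: basisv R i) 0 j) = if P i then G a else 0.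
Proof.
move=> G0; case Pi: (P i).
  rewrite (bigD1 i) //= basis_entry eqxx big1 ?addr0 //.
  by move=> j /andP[_ /negPf ji]; rewrite basis_entry ji G0.
apply: big1 => j Pj; rewrite basis_entry; case: eqP => // ji.
by rewrite ji Pi in Pj.
Qed.

Lemma sum_basis_id (R : realType) n (P : pred 'I_n) i (a : R) :
  \sum_(j < n | P j) (a *: basisv R i) 0 j = if P i then a else 0.
Proof. exact: (@sum_basis R n P (fun x => x)). Qed.

Theorem proposition7 (R : realType) (n : nat) (mu : R)
    (f : 'rV[R]_n -> R) (U : set 'rV[R]_n) (xs ys : 'rV[R]_n) :
  (0 < n)%N -> 0 < mu ->
  open U -> sphere (n:=n) `<=` U -> smooth_on U f ->
  local_min_on_sphere (fun x => f x + mu * l1norm x) xs ->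
  proj_tan xs (egrad f xs + ys) = 0 ->
  mu_subdiff_l1 mu xs ys ->
  (forall v : 'rV[R]_n, exists xi d,
      tangent xs xi /\ crit_cone mu xs ys d /\ v = xi + d) /\
  (forall y : 'rV[R]_n,
      proj_tan xs (egrad f xs + y) = 0 -> mu_subdiff_l1 mu xs y -> y = ys).
Proof.
move=> _ mu0 _ _ _ [sph _] hp hy.
have [i0 xn0] : exists i, xs 0 i != 0.
  apply/not_existsP => H.
  move: sph; rewrite /sphere /= /dotv big1 => [/eqP|j _]; first by rewrite eq_sym oner_eq0.
  by have /negP := H j; rewrite negbK => /eqP ->; rewrite mulr0.
have ysv : ys 0 i0 = mu * `|xs 0 i0| / xs 0 i0.
  by rewrite -(@yval _ _ _ _ _ i0 hy) mulfK.
split.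
  move=> v; set c := dotv xs v / xs 0 i0.
  exists (v - c *: basisv R i0), (c *: basisv R i0); split; last split.
  - by rewrite /tangent /= dotvB dot_basis_r /c divfK // subrr.
  - rewrite /crit_cone /= /theta_dd sum_basis ?normr0 // !sum_basis_id dot_basis_l ysv (negPf xn0).
    case: (ltrgtP (xs 0 i0) 0) => hx.
    + rewrite ltr0_norm // mulrN mulNr -mulrA divff // mulr1; lra.
    + rewrite gtr0_norm // -mulrA divff // mulr1; lra.
    + by rewrite hx eqxx in xn0.
  - by rewrite subrK.
move=> y hp' hy'.
have yi0 : y 0 i0 = ys 0 i0.
  by rewrite ysv -(@yval _ _ _ _ _ i0 hy') mulfK.
rewrite /proj_tan in hp' hp.
move: (egrad f xs) hp hp' => e hp hp'.
set A := dotv xs (e + y) in hp'.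
set B := dotv xs (e + ys) in hp.
have eA j : e 0 j + y 0 j - A * xs 0 j = 0.
  by have := congr1 (fun M : 'rV[R]_n => M 0 j) hp'; rewrite !mxE.
have eB j : e 0 j + ys 0 j - B * xs 0 j = 0.
  by have := congr1 (fun M : 'rV[R]_n => M 0 j) hp; rewrite !mxE.
have AB : A = B.
  apply: (mulIf xn0); have := eA i0; have := eB i0; rewrite yi0; lra.
apply/rowP => j.
have := eA j; have := eB j; rewrite AB; lra.
Qed.
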